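(* Let $\omega\in\{0,\infty\}$ and let $\Gamma_M$ ($M>0$) be a family of nonatomic routing games on a fixed graph with fixed OD pairs $\mathcal I$, path sets and edge costs $(c_e)_{e\in\mathcal E}$, in which OD pair $i$ has demand $m^i=\lambda^iM$ for fixed constants $\lambda^i>0$ with $\sum_i\lambda^i=1$. If every $c_e$ is a polynomial, then $\mathrm{PoA}(\Gamma_M)\to 1$ as $M\to\omega$.
   Context: A nonatomic routing game consists of: a finite directed multigraph with edge set $\mathcal E$; a finite set $\mathcal I$ of OD pairs, each $i$ with demand $m^i\ge 0$ and a nonempty finite set $\mathcal P^i$ of paths from its origin to its destination, the $\mathcal P^i$ pairwise disjoint, $\mathcal P=\bigcup_i\mathcal P^i$; and continuous nondecreasing edge costs $c_e:[0,\infty)\to[0,\infty)$. Total inflow $M=\sum_i m^i>0$. Feasible flows: $f\in\mathbb R_+^{\mathcal P}$ with $\sum_{p\in\mathcal P^i}f_p=m^i$; loads $x_e=\sum_{p\ni e}f_p$; path costs $c_p(f)=\sum_{e\in p}c_e(x_e)$. A Wardrop equilibrium is a feasible $f^*$ with $c_p(f^* )\le c_{p'}(f^* )$ whenever $p,p'\in\mathcal P^i$, $f^*_p>0$. Social cost $L(x)=\sum_e x_ec_e(x_e)$; $\mathrm{Opt}$ its minimum over feasible loads, $\mathrm{Eq}=L(x^* )$ at an equilibrium load, $\mathrm{PoA}=\mathrm{Eq}/\mathrm{Opt}$ (assumed $\mathrm{Opt}>0$; otherwise $\mathrm{PoA}:=1$). *)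

(* Defs.v *)
From HB Require Import structures.
From mathcomp Require Import all_boot all_order all_algebra.
From mathcomp Require Import all_classical all_reals all_analysis.
Set Implicit Arguments. Unset Strict Implicit. Unset Printing Implicit Defensive.
Import Order.TTheory GRing.Theory Num.Theory.
Import numFieldNormedType.Exports.
Local Open Scope classical_set_scope.
Local Open Scope ring_scope.

Section Routing.
Variables (R : realType) (V E : finType) (src tgt : E -> V).

Definition is_simple_path (o d : V) (s : seq E) : bool :=
  match s with
  | [::] => false
  | e0 :: _ =>
      [&& src e0 == o,
          path (fun e e' => tgt e == src e') e0 (behead s),
          tgt (last e0 s) == d
        & uniq (o :: map tgt s)]
  end.

Variables (I P : finType) (od : P -> I) (path_of : P -> seq E)
          (c : E -> {poly R}).

Definition load (f : P -> R) (e : E) : R :=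
  \sum_(p : P | e \in path_of p) f p.

Definition path_cost (f : P -> R) (p : P) : R :=
  \sum_(e <- path_of p) (c e).[load f e].

Definition feasible (m : I -> R) (f : P -> R) : Prop :=
  (forall p, 0 <= f p) /\ (forall i, \sum_(p : P | od p == i) f p = m i).

Definition wardrop (m : I -> R) (f : P -> R) : Prop :=
  feasible m f /\
  (forall p p', od p = od p' -> 0 < f p -> path_cost f p <= path_cost f p').

Definition social_cost (f : P -> R) : R :=
  \sum_(e : E) load f e * (c e).[load f e].

Definition Opt (m : I -> R) : R :=
  inf [set social_cost f | f in [set f | feasible m f]].

Definition PoA (m : I -> R) (feq : P -> R) : R :=
  if 0 < Opt m then social_cost feq / Opt m else 1.

End Routing.

(* Main.v *)
Require Import Defs.
From HB Require Import structures.
From mathcomp Require Import all_boot all_order all_algebra.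
From mathcomp Require Import all_classical all_reals all_analysis.
From mathcomp Require Import ring lra zify.
Import Order.TTheory GRing.Theory Num.Theory.
Import numFieldNormedType.Exports.
Local Open Scope classical_set_scope.
Local Open Scope ring_scope.
Set Implicit Arguments. Unset Strict Implicit. Unset Printing Implicit Defensive.

Section Poly.
Variable R : realType.
Implicit Types (p q : {poly R}) (x M : R).

Definition Sabs p := \sum_(i < size p) `|p`_i|.

Lemma Sabs_ge0 p : 0 <= Sabs p.
Proof. by apply: sumr_ge0 => i _. Qed.

Lemma poly_bound_inf p k x M : (size p <= k)%N -> 0 <= x -> x <= M -> 1 <= M ->
  `|p.[x]| * M <= Sabs p * M ^+ k.
Proof.
move=> sk x0 xM M1.
have M0 : 0 <= M by apply: le_trans M1.
rewrite horner_coef /Sabs !mulr_suml.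
apply: le_trans (ler_wpM2r M0 (ler_norm_sum _ _ _)) _.
rewrite mulr_suml; apply: ler_sum => i _.
rewrite normrM normrX (ger0_norm x0) -mulrA; apply: ler_wpM2l => //.
apply: (@le_trans _ _ (M ^+ i * M)).
  by apply: ler_wpM2r => //; apply: lerXn2r; rewrite ?nnegrE.
rewrite -exprSr; apply: ler_weXn2l => //.
by apply: leq_trans sk; exact: ltn_ord.
Qed.

Lemma poly_bound0 p k x : (forall j, (j < k)%N -> p`_j = 0) -> 0 <= x -> x <= 1 ->
  `|p.[x]| <= Sabs p * x ^+ k.
Proof.
move=> pk x0 x1.
rewrite horner_coef /Sabs mulr_suml.
apply: le_trans (ler_norm_sum _ _ _) _.
apply: ler_sum => i _.
rewrite normrM normrX (ger0_norm x0).
case: (ltnP i k) => ik.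
  by rewrite pk // normr0 !mul0r.
by apply: ler_wpM2l => //; apply: ler_wiXn2l.
Qed.

Lemma lead_decomp p : (size (p - lead_coef p *: 'X^((size p).-1))%R <= (size p).-1)%N.
Proof.
apply/leq_sizeP => j hj; rewrite coefB coefZ coefXn.
case: (eqVneq j (size p).-1) => [->|ne]; first by rewrite mulr1 lead_coefE subrr.
rewrite mulr0 subr0 nth_default //.
by move: hj ne; case: (size p) => //= n; rewrite leq_eqVlt eq_sym => /orP[->|].
Qed.

Lemma lead_pos p : p != 0 -> (forall x, 0 <= x -> 0 <= p.[x]) -> 0 < lead_coef p.
Proof.
move=> pn0 pge.
set a := lead_coef p.
have an0 : a != 0 by rewrite lead_coef_eq0.
rewrite lt_neqAle eq_sym an0 /=; rewrite leNgt; apply/negP => aneg.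
set q := p - a *: 'X^((size p).-1).
have hq := lead_decomp p; rewrite -/a -/q in hq.
have sp : (0 < size p)%N by rewrite size_poly_gt0.
set S := Sabs q.
have S0 : 0 <= S := Sabs_ge0 q.
set x := 1 + S / (- a).
have x1 : 1 <= x by rewrite lerDl divr_ge0 // oppr_ge0 ltW.
have x0 : 0 < x by apply: lt_le_trans x1.
have hb := poly_bound_inf hq (ltW x0) (lexx x) x1.
have pe : p.[x] = q.[x] + a * x ^+ (size p).-1.
  by rewrite /q hornerD hornerN hornerZ hornerXn addrNK.
have : p.[x] * x < 0.
  rewrite pe mulrDl.
  apply: (@le_lt_trans _ _ (S * x ^+ (size p).-1 + a * x ^+ (size p).-1 * x)).
    apply: lerD => //; apply: le_trans hb.
    by apply: ler_wpM2r; [exact: ltW | exact: ler_norm].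
  rewrite mulrAC -mulrDl pmulr_llt0 ?exprn_gt0 //.
  have -> : S + a * x = a by rewrite /x; field.
  done.
by rewrite ltNge mulr_ge0 // ?(pge x (ltW x0)) ?ltW.
Qed.

Lemma low_decomp p v : (forall j, (j < v)%N -> p`_j = 0) ->
  forall j, (j < v.+1)%N -> (p - p`_v *: 'X^v)`_j = 0.
Proof.
move=> pv j hj; rewrite coefB coefZ coefXn.
case: (eqVneq j v) => [->|ne]; first by rewrite mulr1 subrr.
by rewrite mulr0 subr0 pv // ltn_neqAle ne -ltnS.
Qed.

Lemma low_pos p v : (forall j, (j < v)%N -> p`_j = 0) -> p`_v != 0 ->
  (forall x, 0 <= x -> 0 <= p.[x]) -> 0 < p`_v.
Proof.
move=> pv bn0 pge.
set b := p`_v.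
rewrite lt_neqAle eq_sym bn0 /=; rewrite leNgt; apply/negP => bneg.
set q := p - b *: 'X^v.
have hq := low_decomp pv.
set S := Sabs q.
have S0 : 0 <= S := Sabs_ge0 q.
have d0 : 0 < - b + S + 1 by lra.
set x := - b / (- b + S + 1).
have x0 : 0 < x by rewrite divr_gt0 // oppr_gt0.
have x1 : x <= 1.
  by rewrite ler_pdivrMr // mul1r; lra.
have hb := poly_bound0 hq (ltW x0) x1.
have pe : p.[x] = q.[x] + b * x ^+ v.
  by rewrite /q hornerD hornerN hornerZ hornerXn addrNK.
have : p.[x] < 0.
  rewrite pe.
  apply: (@le_lt_trans _ _ (S * x ^+ v.+1 + b * x ^+ v)).
    by apply: lerD => //; apply: le_trans hb; rewrite ler_norm.
  rewrite exprS mulrA -mulrDl pmulr_llt0 ?exprn_gt0 //.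
  have -> : S * x + b = b * (1 - b) / (- b + S + 1).
    rewrite /x; field; by rewrite lt0r_neq0.
  rewrite pmulr_llt0 ?invr_gt0 // nmulr_rlt0 //.
  by rewrite subr_gt0 (lt_trans bneg).
by rewrite ltNge pge // ltW.
Qed.

End Poly.

Section Flow.
Variables (R : realType) (E I P : finType) (od : P -> I) (path_of : P -> seq E)
  (c : E -> {poly R}).
Hypothesis Huniq : forall p, uniq (path_of p).

Lemma sum_load_cost (w y : P -> R) :
  \sum_e load path_of w e * (c e).[load path_of y e] =
  \sum_p w p * path_cost path_of c y p.
Proof.
rewrite /load; under eq_bigr do rewrite mulr_suml.
rewrite (exchange_big_dep xpredT) //=.
apply: eq_bigr => p _; rewrite /path_cost big_uniq // mulr_sumr.
by apply: eq_bigr.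
Qed.

Lemma social_paths (f : P -> R) :
  social_cost path_of c f = \sum_p f p * path_cost path_of c f p.
Proof. by rewrite /social_cost sum_load_cost. Qed.

Lemma VI_gen (m : I -> R) (y w C : P -> R) :
  (forall i, 0 < m i) ->
  (forall p, 0 <= y p) -> (forall i, \sum_(p | od p == i) y p = m i) ->
  (forall p p', od p = od p' -> 0 < y p -> C p <= C p') ->
  (forall p, 0 <= w p) -> (forall i, \sum_(p | od p == i) w p = m i) ->
  \sum_p y p * C p <= \sum_p w p * C p.
Proof.
move=> mpos y0 ysum Hw w0 wsum.
rewrite (partition_big od xpredT) //= [leRHS](partition_big od xpredT) //=.
apply: ler_sum => i _.
have mi := mpos i.
rewrite -(ler_pM2l mi).
rewrite -{1}(wsum i) -(ysum i) !mulr_suml.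
have -> : \sum_(q | od q == i) w q * \sum_(p | od p == i) y p * C p =
   \sum_(q | od q == i) \sum_(p | od p == i) w q * (y p * C p).
  by apply: eq_bigr => q _; rewrite mulr_sumr.
have -> : \sum_(p | od p == i) y p * \sum_(q | od q == i) w q * C q =
   \sum_(p | od p == i) \sum_(q | od q == i) y p * (w q * C q).
  by apply: eq_bigr => q _; rewrite mulr_sumr.
rewrite [leRHS](exchange_big_dep (fun q => od q == i)) //=.
apply: ler_sum => q Hq.
rewrite [leRHS](eq_bigl (fun p => od p == i)); last by move=> p; rewrite Hq andbT.
apply: ler_sum => p Hp.
have [yp0|ypos] := eqVneq (y p) 0; first by rewrite yp0 !mul0r !mulr0.
have ypos' : 0 < y p by rewrite lt0r ypos y0.
rewrite [leRHS]mulrCA.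
apply: ler_wpM2l; first exact: w0.
apply: ler_wpM2l; first exact: y0.
apply: Hw => //.
by rewrite (eqP Hq) (eqP Hp).
Qed.

Lemma wardrop_VI (m : I -> R) (y w : P -> R) :
  (forall i, 0 < m i) -> wardrop od path_of c m y -> feasible od m w ->
  \sum_p y p * path_cost path_of c y p <= \sum_p w p * path_cost path_of c y p.
Proof.
move=> mpos [[y0 ysum] Hw] [w0 wsum].
exact: (@VI_gen m y w (path_cost path_of c y) mpos y0 ysum Hw w0 wsum).
Qed.

Section Feas.
Variables (lam : I -> R).
Hypothesis Hlam1 : \sum_i lam i = 1.

Definition feasM (M : R) (f : P -> R) := feasible od (fun i => lam i * M) f.

Lemma load_ge0 (f : P -> R) e : (forall p, 0 <= f p) -> 0 <= load path_of f e.
Proof. by move=> f0; apply: sumr_ge0 => p _. Qed.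

Lemma sum_flow M f : feasM M f -> \sum_p f p = M.
Proof.
move=> [f0 fs]; rewrite (partition_big od xpredT) //=.
under eq_bigr do rewrite fs.
by rewrite -mulr_suml Hlam1 mul1r.
Qed.

Lemma load_le M f e : feasM M f -> load path_of f e <= M.
Proof.
move=> Hf; rewrite -(sum_flow Hf) /load [leRHS](bigID (fun p => e \in path_of p)) /=.
rewrite lerDl; apply: sumr_ge0 => p _; exact: Hf.1.
Qed.

Lemma flow_le M f p : feasM M f -> f p <= M.
Proof.
move=> Hf; rewrite -(sum_flow Hf) (bigD1 p) //= lerDl.
by apply: sumr_ge0 => q _; exact: Hf.1.
Qed.

Lemma flow_le_load (f : P -> R) p e : (forall q, 0 <= f q) -> e \in path_of p -> f p <= load path_of f e.
Proof.
move=> f0 ep; rewrite /load (bigD1 p) //= lerDl.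
by apply: sumr_ge0 => q _; exact: f0.
Qed.

Variables (Bad : pred E) (g : I -> P).
Hypothesis Hg : forall i, od (g i) = i.
Hypothesis Hgood : forall i e, e \in path_of (g i) -> ~~ Bad e.

Definition badp p := has Bad (path_of p).

Definition Bsum (z : P -> R) i := \sum_(q | badp q && (od q == i)) z q.

Definition rr (z : P -> R) p :=
  (if badp p then 0 else z p) + (if p == g (od p) then Bsum z (od p) else 0).

Lemma badp_g i : badp (g i) = false.
Proof. by apply/hasP => -[e /Hgood he be]; rewrite be in he. Qed.

Lemma sum_gpart (z : P -> R) i :
  \sum_(p | od p == i) (if p == g (od p) then Bsum z (od p) else 0) = Bsum z i.
Proof.
rewrite (bigD1 (g i)) /=; last by rewrite Hg.
rewrite Hg eqxx big1 ?addr0 // => p /andP[/eqP odp pg].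
by rewrite odp (negbTE pg).
Qed.

Lemma Bsum_ge0 z i : (forall p, 0 <= z p) -> 0 <= Bsum z i.
Proof. by move=> z0; apply: sumr_ge0. Qed.

Lemma rr_ge0 z p : (forall p, 0 <= z p) -> 0 <= rr z p.
Proof.
move=> z0; rewrite /rr; apply: addr_ge0; first by case: ifP.
by case: ifP => // _; exact: Bsum_ge0.
Qed.

Lemma rr_feas M z : feasM M z -> feasM M (rr z).
Proof.
move=> [z0 zs]; split; first by move=> p; exact: rr_ge0.
move=> i; rewrite /rr big_split /= sum_gpart -(zs i).
rewrite /Bsum [in RHS](bigID badp) /= addrC; congr (_ + _).
  by apply: eq_bigl => p; rewrite andbC.
rewrite [RHS]big_mkcond [LHS]big_mkcond /=; apply: eq_bigr => p _.
by case: (od p == i); case: (badp p).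
Qed.

Lemma rr_load_bad z e : Bad e -> load path_of (rr z) e = 0.
Proof.
move=> be; rewrite /load big1 // => p ep.
have bp : badp p by apply/hasP; exists e.
rewrite /rr bp add0r; case: eqP => // pg.
by rewrite pg in ep; rewrite (negbTE (Hgood ep)) in be.
Qed.

Lemma rr_load_le z e : (forall p, 0 <= z p) ->
  load path_of (rr z) e <= load path_of z e + \sum_(p | badp p) z p.
Proof.
move=> z0; rewrite /load /rr big_split /=; apply: lerD.
  by apply: ler_sum => p _; case: ifP.
apply: (@le_trans _ _ (\sum_p (if p == g (od p) then Bsum z (od p) else 0))).
  rewrite [leRHS](bigID (fun p => e \in path_of p)) /= lerDl.
  by apply: sumr_ge0 => p _; case: ifP => // _; exact: Bsum_ge0.
rewrite (partition_big od xpredT) //= [leRHS](partition_big od xpredT) //=.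
apply: ler_sum => i _; rewrite sum_gpart /Bsum.
by rewrite le_eqVlt; apply/orP; left; apply/eqP; apply: eq_bigl.
Qed.

End Feas.

End Flow.

Section Aux.
Variable R : realType.

Lemma young (k : nat) (Z X : R) : 0 <= Z -> 0 <= X ->
  k.+1%:R * (Z * X ^+ k) <= Z ^+ k.+1 + k%:R * X ^+ k.+1.
Proof.
move=> Z0 X0.
have cst : \sum_(i < k.+1) X ^+ k = k.+1%:R * X ^+ k.
  by rewrite sumr_const card_ord mulr_natl.
have key : k.+1%:R * X ^+ k * (Z - X) <= Z ^+ k.+1 - X ^+ k.+1.
  rewrite subrXX /= mulrC.
  case: (leP X Z) => h.
    apply: ler_wpM2l; first by rewrite subr_ge0.
    rewrite -cst; apply: ler_sum => i _.
    have ik : (i <= k)%N by rewrite -ltnS.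
    rewrite (_ : X ^+ k = X ^+ (k - i) * X ^+ i); last by rewrite -exprD subnK.
    apply: ler_wpM2r; first exact: exprn_ge0.
    by apply: lerXn2r; rewrite ?nnegrE.
  apply: ler_wnM2l; first by rewrite subr_le0 ltW.
  rewrite -cst; apply: ler_sum => i _.
  have ik : (i <= k)%N by rewrite -ltnS.
  rewrite (_ : X ^+ k = X ^+ (k - i) * X ^+ i); last by rewrite -exprD subnK.
  apply: ler_wpM2r; first exact: exprn_ge0.
  by apply: lerXn2r; rewrite ?nnegrE // ltW.
move: key; rewrite !exprS -[k.+1]addn1 natrD.
set xk := X ^+ k.
move=> key; lra.
Qed.

Lemma powdiff (k : nat) (Z Z' M b : R) : 0 <= Z -> Z <= M -> 0 <= Z' -> Z' <= M ->
  0 <= b -> Z' <= Z + b -> Z' ^+ k.+1 <= Z ^+ k.+1 + k.+1%:R * M ^+ k * b.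
Proof.
move=> Z0 ZM Z'0 Z'M b0 hb.
have M0 : 0 <= M by apply: le_trans ZM.
have t0 : 0 <= k.+1%:R * M ^+ k * b by rewrite !mulr_ge0 ?exprn_ge0.
case: (leP Z' Z) => h.
  apply: (@le_trans _ _ (Z ^+ k.+1)); first by apply: lerXn2r; rewrite ?nnegrE.
  by rewrite lerDl.
rewrite -lerBlDl subrXX /=.
apply: (@le_trans _ _ ((Z' - Z) * (k.+1%:R * M ^+ k))).
  apply: ler_wpM2l; first by rewrite subr_ge0 ltW.
  have cst : \sum_(i < k.+1) M ^+ k = k.+1%:R * M ^+ k.
    by rewrite sumr_const card_ord mulr_natl.
  rewrite -cst; apply: ler_sum => i _.
  have ik : (i <= k)%N by rewrite -ltnS.
  rewrite (_ : M ^+ k = M ^+ (k - i) * M ^+ i); last by rewrite -exprD subnK.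
  apply: ler_pM; rewrite ?exprn_ge0 //; by apply: lerXn2r; rewrite ?nnegrE.
rewrite mulrC; apply: ler_wpM2l; first by rewrite mulr_ge0 ?exprn_ge0.
lra.
Qed.

Lemma pig (P : finType) (z : P -> R) (Q : pred P) (s : R) :
  (exists p, Q p) -> 0 <= s -> s <= \sum_(p | Q p) z p ->
  exists p, Q p /\ s / #|P|%:R <= z p.
Proof.
move=> [p0 Qp0] s0 hs.
have cP : (0 < #|P|)%N by apply/card_gt0P; exists p0.
have cP' : 0 < #|P|%:R :> R by rewrite ltr0n.
case: (pselect (exists p, Q p /\ s / #|P|%:R <= z p)) => // H.
exfalso.
have lt : forall p, Q p -> z p < s / #|P|%:R.
  move=> p Qp; rewrite ltNge; apply/negP => hp; apply: H; by exists p.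
have : \sum_(p | Q p) z p < \sum_(p | Q p) s / #|P|%:R.
  apply: ltr_sum => //; apply/hasP; exists p0 => //; exact: mem_index_enum.
apply/negP; rewrite -leNgt; apply: le_trans hs.
apply: (@le_trans _ _ (\sum_p s / #|P|%:R)).
  by rewrite [leRHS](bigID Q) /= lerDl; apply: sumr_ge0 => p _; rewrite divr_ge0 ?ler0n.
rewrite sumr_const (_ : #|xpredT| = #|P|) // -(mulr_natr (s / #|P|%:R) #|P|).
have nz : #|P|%:R != 0 :> R by rewrite gt_eqF.
by rewrite divfK.
Qed.

Lemma posmin (E : finType) (A : pred E) (a : E -> R) :
  (forall e, A e -> 0 < a e) -> exists m, 0 < m /\ m <= 1 /\ forall e, A e -> m <= a e.
Proof.
move=> apos.
set S := \sum_(e | A e) (a e)^-1.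
have S0 : 0 <= S by apply: sumr_ge0 => e Ae; rewrite invr_ge0 ltW ?apos.
exists (1 + S)^-1; split; first by rewrite invr_gt0; lra.
split; first by rewrite invf_le1; lra.
move=> e Ae.
rewrite -[a e]invrK lef_pV2 ?posrE ?invr_gt0 ?apos //; last by lra.
rewrite /S (bigD1 e) //=.
have : 0 <= \sum_(i | A i && (i != e)) (a i)^-1.
  by apply: sumr_ge0 => e' /andP[Ae' _]; rewrite invr_ge0 ltW ?apos.
lra.
Qed.

End Aux.

Lemma final_arith (R : realType) (k Ly G NeM Q' Qy Qz Lz Ab t m : R) :
  0 <= k -> 0 <= NeM -> (k + 1) * Ly <= (k + 1) * G + (k + 1) * NeM ->
  (k + 1) * G <= Q' + k * Qy -> k * Qy <= k * Ly + k * NeM ->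
  Q' <= Qz + Ab -> Qz <= Lz + NeM -> Ab <= t / 2 * m -> 2 * (k + 1) * NeM <= t / 2 * m ->
  Ly <= Lz + t * m.
Proof. move=> *; lra. Qed.

Section Core.
Variables (R : realType) (E I P : finType) (od : P -> I) (path_of : P -> seq E)
  (c : E -> {poly R}) (lam : I -> R).
Hypothesis Huniq : forall p, uniq (path_of p).
Hypothesis Hne : forall i, exists p, od p = i.
Hypothesis Hc0 : forall e (x : R), 0 <= x -> 0 <= (c e).[x].
Hypothesis Hcmono : forall e (x y : R), 0 <= x -> x <= y -> (c e).[x] <= (c e).[y].
Hypothesis Hlam : forall i, 0 < lam i.
Hypothesis Hlam1 : \sum_i lam i = 1.
Variable feq : R -> P -> R.
Hypothesis Hfeq : forall M : R, 0 < M -> wardrop od path_of c (fun i => lam i * M) (feq M).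

Variable (F : set_system R).
Context {FF : Filter F}.
Variables (k : nat) (T Bad : pred E) (a : E -> R).
Hypothesis HTB : forall e, T e -> ~~ Bad e.
Hypothesis Hgoodp : forall i, exists g, od g = i /\ forall e, e \in path_of g -> ~~ Bad e.
Hypothesis Hstar : exists i, forall p, od p = i -> exists e, e \in path_of p /\ (T e || Bad e).
Hypothesis Ha : forall e, T e -> 0 < a e.
Hypothesis HF0 : \forall M \near F, 0 < M.
Hypothesis HE1 : forall eta, 0 < eta -> \forall M \near F, forall e x, T e -> 0 <= x -> x <= M ->
   `|(c e).[x] - a e * x ^+ k| <= eta * M ^+ k.
Hypothesis HE2 : forall eta, 0 < eta -> \forall M \near F, forall e x, ~~ T e -> ~~ Bad e ->
   0 <= x -> x <= M -> (c e).[x] <= eta * M ^+ k.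
Hypothesis HE3 : forall d K, 0 < d -> d <= 1 ->
   \forall M \near F, forall e, Bad e -> K * M ^+ k <= (c e).[d * M].

Local Notation L := (social_cost path_of c).
Local Notation feas := (feasM od lam).
Local Notation load := (load path_of).

Lemma cardP_gt0 : (0 < #|P|)%N.
Proof.
case: (pickP (@predT I)) => [i _|h].
  by have [p _] := Hne i; apply/card_gt0P; exists p.
have : \sum_i lam i = 0 by rewrite big1 // => i _; move: (h i).
by rewrite Hlam1 => /eqP; rewrite oner_eq0.
Qed.

Lemma lam_le1 i : lam i <= 1.
Proof.
rewrite -Hlam1 (bigD1 i) //= lerDl; apply: sumr_ge0 => j _; exact: ltW.
Qed.

Lemma L_ge_term M z e : feas M z -> load z e * (c e).[load z e] <= L z.
Proof.
move=> Hz; rewrite /social_cost (bigD1 e) //= lerDl; apply: sumr_ge0 => e' _.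
have l0 : 0 <= load z e' by apply: load_ge0; exact: Hz.1.
by apply: mulr_ge0 => //; exact: Hc0.
Qed.

Lemma c0_bound : exists c0, 0 < c0 /\
  \forall M \near F, forall z, feas M z -> c0 * M ^+ k.+1 <= L z.
Proof.
have [m [m0 [m1 hm]]] := posmin Ha.
have [ist Hi] := Hstar.
set rho := lam ist / #|P|%:R.
have cP : 1 <= #|P|%:R :> R by rewrite ler1n; exact: cardP_gt0.
have rho0 : 0 < rho by rewrite divr_gt0 ?Hlam //; lra.
have rho1 : rho <= 1.
  rewrite ler_pdivrMr; last by lra.
  have := lam_le1 ist; lra.
set eta := m * rho ^+ k / 2.
have eta0 : 0 < eta by rewrite divr_gt0 // mulr_gt0 // exprn_gt0.
exists (rho * eta); split; first exact: mulr_gt0.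
have h1 := HE1 eta0.
have h3 := HE3 (m * rho ^+ k) rho0 rho1.
apply: (filter_app _ _ HF0); apply: (filter_app _ _ h3); apply: filterS h1.
move=> M H1 H3 M0 z Hz.
have [p0 p0i] := Hne ist.
have hs : lam ist * M <= \sum_(p | od p == ist) z p by rewrite (Hz.2 ist).
have [p [/eqP odp hp]] := @pig _ _ z (fun p => od p == ist) (lam ist * M)
  (ex_intro _ p0 (introT eqP p0i)) (mulr_ge0 (ltW (Hlam ist)) (ltW M0)) hs.
have {}hp : rho * M <= z p by rewrite /rho mulrAC.
have [e [ep Te]] := Hi p odp.
have z0 := Hz.1.
have Xe : rho * M <= load z e := le_trans hp (flow_le_load z0 ep).
have rM0 : 0 <= rho * M by rewrite mulr_ge0 ?ltW.
have rMM : rho * M <= M by rewrite -[leRHS]mul1r; apply: ler_wpM2r => //; exact: ltW.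
apply: le_trans (L_ge_term e Hz).
have cm : (c e).[rho * M] <= (c e).[load z e] by apply: Hcmono.
have key : eta * M ^+ k <= (c e).[rho * M].
  have Mk0 : 0 < M ^+ k by exact: exprn_gt0.
  have e1 : m * rho ^+ k * M ^+ k = 2 * (eta * M ^+ k) by rewrite /eta; field.
  have e2 : 0 <= eta * M ^+ k by rewrite mulr_ge0 ?ltW.
  case/orP: Te => [Te|Be].
    have := H1 e (rho * M) Te rM0 rMM; rewrite ler_norml => /andP[hl _].
    have ha : m * (rho * M) ^+ k <= a e * (rho * M) ^+ k.
      by apply: ler_wpM2r; [rewrite exprn_ge0 | exact: hm].
    rewrite exprMn mulrA in ha.
    rewrite exprMn in hl; lra.
  have := H3 e Be; lra.
have -> : rho * eta * M ^+ k.+1 = (rho * M) * (eta * M ^+ k) by rewrite exprS; ring.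
apply: ler_pM => //; first by apply: mulr_ge0; [exact: ltW | apply: exprn_ge0; exact: ltW].
exact: le_trans key cm.
Qed.

Lemma ld_le M (f : P -> R) e : feas M f -> load f e <= M.
Proof. by move=> Hf; exact: (load_le path_of Hlam1 e Hf). Qed.

Lemma goodg : exists g : I -> P, (forall i, od (g i) = i) /\
  (forall i e, e \in path_of (g i) -> ~~ Bad e).
Proof.
have [g Hg] := boolp.choice Hgoodp.
by exists g; split => [i|i e]; [exact: (Hg i).1 | exact: (Hg i).2 e].
Qed.

Lemma eq_VI M : 0 < M -> forall w, feas M w ->
  L (feq M) <= \sum_e load w e * (c e).[load (feq M) e].
Proof.
move=> M0 w Hw.
rewrite (social_paths c Huniq) (sum_load_cost c Huniq).
apply: (wardrop_VI _ (Hfeq M0) Hw) => i.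
exact: mulr_gt0.
Qed.

Lemma Kg_bound : exists Kg, 0 <= Kg /\ \forall M \near F, L (feq M) <= Kg * M ^+ k.+1.
Proof.
have [g [Hg1 Hg2]] := goodg.
exists (\sum_e (`|a e| + 1)); split.
  by apply: sumr_ge0 => e _; apply: addr_ge0.
have h1 := HE1 ltr01; have h2 := HE2 ltr01.
apply: (filter_app _ _ HF0); apply: (filter_app _ _ h2); apply: filterS h1.
move=> M H1 H2 M0.
set y := feq M.
have yf : feas M y := (Hfeq M0).1.
have rf := rr_feas path_of Bad Hg1 yf.
apply: le_trans (eq_VI M0 rf) _.
rewrite mulr_suml; apply: ler_sum => e _.
set Z := load (rr od path_of Bad g y) e; set X := load y e.
have X0 : 0 <= X by apply: load_ge0; exact: yf.1.
have XM : X <= M by exact: ld_le.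
have Z0 : 0 <= Z by apply: load_ge0; exact: rf.1.
have ZM : Z <= M by exact: ld_le.
have cX0 := Hc0 e X0.
have Mk0 : 0 <= M ^+ k by rewrite exprn_ge0 // ltW.
have aM0 : 0 <= `|a e| * M ^+ k by rewrite mulr_ge0.
have -> : (`|a e| + 1) * M ^+ k.+1 = M * ((`|a e| + 1) * M ^+ k) by rewrite exprS; ring.
case: (boolP (Bad e)) => Be.
  rewrite /Z (rr_load_bad od Hg2 y Be) mul0r.
  apply: mulr_ge0; [exact: ltW | apply: mulr_ge0 => //; exact: addr_ge0].
have cb : (c e).[X] <= (`|a e| + 1) * M ^+ k.
  case: (boolP (T e)) => Te.
    have := H1 e X Te X0 XM; rewrite ler_norml => /andP[_ hr].
    have : a e * X ^+ k <= `|a e| * M ^+ k.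
      apply: le_trans (ler_norm _) _; rewrite normrM normrX (ger0_norm X0).
      by apply: ler_wpM2l => //; apply: lerXn2r; rewrite ?nnegrE // ltW.
    lra.
  have := H2 e X Te Be X0 XM; lra.
by apply: ler_pM.
Qed.

Lemma main_bound theta : 0 < theta -> theta <= 1 ->
  \forall M \near F, forall z, feas M z -> L (feq M) <= L z + theta * M ^+ k.+1.
Proof.
move=> th0 th1.
have [Kg [Kg0 hKg]] := Kg_bound.
have [g [Hg1 Hg2]] := goodg.
set A := \sum_e (if T e then a e else 0).
have A0 : 0 <= A by apply: sumr_ge0 => e _; case: ifP => // /Ha /ltW.
have nk : k.+1%:R = k%:R + 1 :> R by rewrite -addn1 natrD.
have k0 : 0 <= k%:R :> R by exact: ler0n.
set N : R := #|E|%:R.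
have N0 : 0 <= N by exact: ler0n.
have An0 : 0 <= A * (k%:R + 1) by rewrite mulr_ge0 //; lra.
set d := theta / (2 * (A * (k%:R + 1) + 1)).
have d0 : 0 < d by rewrite divr_gt0 //; lra.
have d1 : d <= 1 by rewrite ler_pdivrMr; lra.
have Ad : A * (k%:R + 1) * d <= theta / 2.
  have -> : A * (k%:R + 1) * d =
     theta / 2 - theta / (2 * (A * (k%:R + 1) + 1)).
    rewrite /d; field; lra.
  have : 0 <= theta / (2 * (A * (k%:R + 1) + 1)) by rewrite divr_ge0; lra.
  lra.
set eta := theta / (4 * (k%:R + 1) * (N + 1)).
have eta0 : 0 < eta by rewrite divr_gt0 // !mulr_gt0; lra.
have Neta : 2 * (k%:R + 1) * N * eta <= theta / 2.
  have -> : 2 * (k%:R + 1) * N * eta = theta / 2 - theta / (2 * (N + 1)).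
    rewrite /eta; field; lra.
  have : 0 <= theta / (2 * (N + 1)) by rewrite divr_ge0; lra.
  lra.
have cP : 1 <= #|P|%:R :> R by rewrite ler1n; exact: cardP_gt0.
set dP := d / #|P|%:R.
have dP0 : 0 < dP by rewrite divr_gt0 //; lra.
have dP1 : dP <= 1 by rewrite ler_pdivrMr; lra.
have h1 := HE1 eta0; have h2 := HE2 eta0; have h3 := HE3 (Kg / dP) dP0 dP1.
apply: (filter_app _ _ HF0); apply: (filter_app _ _ hKg); apply: (filter_app _ _ h3).
apply: (filter_app _ _ h2); apply: filterS h1.
move=> M H1 H2 H3 HK M0 z Hz.
set y := feq M.
have yf : feas M y := (Hfeq M0).1.
set MK := M ^+ k.+1.
have Mk0 : 0 <= M ^+ k by rewrite exprn_ge0 // ltW.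
have MK0 : 0 < MK by rewrite exprn_gt0.
have MKe : MK = M * M ^+ k by rewrite /MK exprS.
have z0 := Hz.1.
set bsum := \sum_(p | badp path_of Bad p) z p.
have b0 : 0 <= bsum by apply: sumr_ge0.
have thMK : 0 <= theta * MK by rewrite mulr_ge0 ?ltW.
case: (leP bsum (d * M)) => hb; last first.
  have dM0 : 0 < d * M by rewrite mulr_gt0.
  have [p0 bp0] : exists p, badp path_of Bad p.
    case: (pselect (exists p, badp path_of Bad p)) => // H; exfalso.
    have : bsum = 0 by rewrite /bsum big1 // => p bp; case: H; exists p.
    lra.
  have [p [bp hp]] := pig (ex_intro _ p0 bp0) (ltW dM0) (ltW hb).
  have {}hp : dP * M <= z p by rewrite /dP mulrAC.
  case/hasP: bp => e ep Be.
  have Xe : dP * M <= load z e := le_trans hp (flow_le_load z0 ep).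
  have dM0' : 0 <= dP * M by rewrite mulr_ge0 ?ltW.
  have cm : (c e).[dP * M] <= (c e).[load z e] := Hcmono e dM0' Xe.
  have H3e := H3 e Be.
  have hLz := L_ge_term e Hz.
  have : Kg * MK <= load z e * (c e).[load z e].
    have -> : Kg * MK = (dP * M) * (Kg / dP * M ^+ k).
      by rewrite MKe; field; rewrite gt_eqF.
    apply: ler_pM => //; first by rewrite mulr_ge0 // divr_ge0 // ltW.
    exact: le_trans H3e cm.
  have HK' : L y <= Kg * MK by exact: HK.
  lra.
have Hrr := rr_feas path_of Bad Hg1 Hz.
set z' := rr od path_of Bad g z.
have hVI := eq_VI M0 Hrr.
have X0 e : 0 <= load y e by apply: load_ge0; exact: yf.1.
have XM e : load y e <= M by exact: ld_le.
have Z0 e : 0 <= load z e by apply: load_ge0.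
have ZM e : load z e <= M by exact: ld_le.
have Z'0 e : 0 <= load z' e by apply: load_ge0; exact: Hrr.1.
have Z'M e : load z' e <= M by exact: ld_le.
set eM := eta * MK.
have eM0 : 0 <= eM by rewrite mulr_ge0 ?ltW.
have NeM : N * eM = \sum_(e : E) eM.
  by rewrite sumr_const -mulr_natl.
have hb2 : \sum_e load z' e * (c e).[load y e] <=
    \sum_e (if T e then a e * (load z' e * load y e ^+ k) else 0) + N * eM.
  rewrite NeM -big_split /=; apply: ler_sum => e _.
  have hZ' : load z' e * (eta * M ^+ k) <= eM.
    rewrite /eM MKe mulrCA.
    apply: ler_wpM2l; [exact: ltW | apply: ler_wpM2r => //; exact: Z'M].
  case: (boolP (Bad e)) => Be.
    rewrite (rr_load_bad od Hg2 z Be) mul0r.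
    have -> : T e = false by apply/negP => /HTB; rewrite Be.
    by rewrite add0r.
  case: (boolP (T e)) => Te.
    have := H1 e (load y e) Te (X0 e) (XM e); rewrite ler_norml => /andP[_ hr].
    have hr' : (c e).[load y e] <= a e * load y e ^+ k + eta * M ^+ k by lra.
    have h := ler_wpM2l (Z'0 e) hr'.
    lra.
  have hr := H2 e (load y e) Te Be (X0 e) (XM e).
  have h := ler_wpM2l (Z'0 e) hr.
  lra.
set G := \sum_e (if T e then a e * (load z' e * load y e ^+ k) else 0).
set Q' := \sum_e (if T e then a e * load z' e ^+ k.+1 else 0).
set Qy := \sum_e (if T e then a e * load y e ^+ k.+1 else 0).
set Qz := \sum_e (if T e then a e * load z e ^+ k.+1 else 0).
have hc : (k%:R + 1) * G <= Q' + k%:R * Qy.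
  rewrite /G /Q' /Qy mulr_sumr [k%:R * _]mulr_sumr -big_split /=.
  apply: ler_sum => e _; case: ifP => Te; last by rewrite !mulr0 addr0.
  have hy := young k (Z'0 e) (X0 e).
  rewrite nk in hy.
  have ha := ler_wpM2l (ltW (Ha Te)) hy.
  lra.
have hd : forall f, feas M f -> \sum_e (if T e then a e * load f e ^+ k.+1 else 0)
    <= L f + N * eM.
  move=> f Hf; rewrite /social_cost NeM -big_split /=; apply: ler_sum => e _.
  have Xf0 : 0 <= load f e by apply: load_ge0; exact: Hf.1.
  have XfM : load f e <= M by exact: ld_le.
  have cf0 := Hc0 e Xf0.
  case: ifP => Te; last by rewrite addr_ge0 // mulr_ge0.
  have := H1 e (load f e) Te Xf0 XfM; rewrite ler_norml => /andP[hl _].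
  have hl' : a e * load f e ^+ k - eta * M ^+ k <= (c e).[load f e] by lra.
  have h := ler_wpM2l Xf0 hl'.
  have hX : load f e * (eta * M ^+ k) <= eM.
    rewrite /eM MKe mulrCA.
    by apply: ler_wpM2l; [exact: ltW | apply: ler_wpM2r].
  rewrite exprS; lra.
have he : Q' <= Qz + A * (k%:R + 1) * M ^+ k * bsum.
  have -> : A * (k%:R + 1) * M ^+ k * bsum =
      \sum_e (if T e then a e else 0) * ((k%:R + 1) * M ^+ k * bsum).
    by rewrite /A -mulr_suml !mulrA.
  rewrite /Q' /Qz -big_split /=; apply: ler_sum => e _.
  case: ifP => Te; last by rewrite mul0r addr0.
  have hl := rr_load_le path_of Bad Hg1 e z0.
  have hp := powdiff k (Z0 e) (ZM e) (Z'0 e) (Z'M e) b0 hl.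
  rewrite nk in hp.
  have ha := ler_wpM2l (ltW (Ha Te)) hp.
  lra.
have hk1 : (k%:R + 1) * L y <= (k%:R + 1) * G + (k%:R + 1) * (N * eM).
  rewrite -mulrDr; apply: ler_wpM2l; first lra.
  exact: le_trans hVI hb2.
have hk2 : k%:R * Qy <= k%:R * L y + k%:R * (N * eM).
  by rewrite -mulrDr; apply: ler_wpM2l => //; exact: hd.
have hz : Qz <= L z + N * eM := hd z Hz.
have f1 : A * (k%:R + 1) * M ^+ k * bsum <= theta / 2 * MK.
  apply: (@le_trans _ _ (A * (k%:R + 1) * M ^+ k * (d * M))).
    by apply: ler_wpM2l => //; rewrite mulr_ge0.
  have -> : A * (k%:R + 1) * M ^+ k * (d * M) = (A * (k%:R + 1) * d) * MK.
    by rewrite MKe; ring.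
  by apply: ler_wpM2r => //; exact: ltW.
have f2 : 2 * (k%:R + 1) * (N * eM) <= theta / 2 * MK.
  have -> : 2 * (k%:R + 1) * (N * eM) = (2 * (k%:R + 1) * N * eta) * MK.
    by rewrite /eM; ring.
  by apply: ler_wpM2r => //; exact: ltW.
have NeM0 : 0 <= N * eM by rewrite mulr_ge0.
exact: (final_arith k0 NeM0 hk1 hc hk2 he hz f1 f2).
Qed.


Lemma L_ge0 M z : feas M z -> 0 <= L z.
Proof.
move=> Hz; rewrite /social_cost; apply: sumr_ge0 => e _.
have l0 : 0 <= load z e by apply: load_ge0; exact: Hz.1.
by apply: mulr_ge0 => //; exact: Hc0.
Qed.

Lemma core_cvg :
  PoA od path_of c (fun i => lam i * M) (feq M) @[M --> F] --> (1 : R).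
Proof.
have [c0 [c00 hc0]] := c0_bound.
apply/cvgrPdist_le => eps eps0.
set th := Num.min (eps * c0) 1.
have th0 : 0 < th by rewrite lt_min mulr_gt0 // ltr01.
have th1 : th <= 1 by rewrite ge_min lexx orbT.
have the : th <= eps * c0 by rewrite ge_min lexx.
have hm := main_bound th0 th1.
apply: (filter_app _ _ HF0); apply: (filter_app _ _ hm); apply: filterS hc0.
move=> M hc hm' M0.
set y := feq M.
have yf : feas M y := (Hfeq M0).1.
rewrite /PoA /Opt.
set S := [set social_cost path_of c f | f in [set f | feasible od (fun i => lam i * M) f]].
have Sy : S (L y) by exists y.
have S0 : S !=set0 by exists (L y).
have MK0 : 0 < M ^+ k.+1 by rewrite exprn_gt0.
have lb1 : c0 * M ^+ k.+1 <= inf S.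
  by apply: (lb_le_inf S0) => r [f Hf <-]; exact: hc f Hf.
have lb2 : L y - th * M ^+ k.+1 <= inf S.
  apply: (lb_le_inf S0) => r [f Hf <-]; have := hm' f Hf; lra.
have ub : inf S <= L y.
  apply: ge_inf => //; exists 0 => r [f Hf <-]; exact: (L_ge0 Hf).
have Opos : 0 < inf S by apply: lt_le_trans lb1; rewrite mulr_gt0.
rewrite Opos.
set O := inf S.
have h1 : th * M ^+ k.+1 <= eps * O.
  apply: (@le_trans _ _ (eps * c0 * M ^+ k.+1)).
    by apply: ler_wpM2r => //; exact: ltW.
  by rewrite -mulrA; apply: ler_wpM2l => //; exact: ltW.
set q := L y / O.
have hq : L y = q * O by rewrite /q divfK // gt_eqF.
have q1 : 1 <= q by rewrite -(ler_pM2r Opos) mul1r -hq.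
have q2 : q <= 1 + eps.
  rewrite -(ler_pM2r Opos) mulrDl mul1r -hq; lra.
rewrite ler_norml; apply/andP; split; lra.
Qed.

End Core.

Section PolyAsym.
Variable R : realType.
Implicit Types (p q : {poly R}).

Lemma heavy_E1 p k eta : size p = k.+1 -> 0 < eta ->
  \forall M \near +oo, forall x : R, 0 <= x -> x <= M ->
    `|p.[x] - lead_coef p * x ^+ k| <= eta * M ^+ k.
Proof.
move=> sp eta0.
set q := p - lead_coef p *: 'X^((size p).-1).
have hq : (size q <= k)%N by move: (lead_decomp p); rewrite -/q sp.
have Sq0 := Sabs_ge0 q.
apply: filterS (nbhs_pinfty_gt (num_real (1 + Sabs q / eta))).
move=> M hM x x0 xM.
have M1 : 1 <= M by apply: ltW; apply: le_lt_trans hM; rewrite lerDl divr_ge0 // ltW.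
have M0 : 0 < M by lra.
have e : p.[x] - lead_coef p * x ^+ k = q.[x].
  by rewrite /q hornerD hornerN hornerZ hornerXn sp.
rewrite e -(ler_pM2r M0).
apply: le_trans (poly_bound_inf hq x0 xM M1) _.
rewrite mulrAC; apply: ler_wpM2r; first by rewrite exprn_ge0 // ltW.
rewrite -ler_pdivrMl //; lra.
Qed.

Lemma heavy_E2 p k eta : (size p <= k)%N -> 0 < eta ->
  \forall M \near +oo, forall x : R, 0 <= x -> x <= M -> p.[x] <= eta * M ^+ k.
Proof.
move=> hp eta0.
have Sp0 := Sabs_ge0 p.
apply: filterS (nbhs_pinfty_gt (num_real (1 + Sabs p / eta))).
move=> M hM x x0 xM.
have M1 : 1 <= M by apply: ltW; apply: le_lt_trans hM; rewrite lerDl divr_ge0 // ltW.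
have M0 : 0 < M by lra.
apply: le_trans (ler_norm _) _.
rewrite -(ler_pM2r M0).
apply: le_trans (poly_bound_inf hp x0 xM M1) _.
rewrite mulrAC; apply: ler_wpM2r; first by rewrite exprn_ge0 // ltW.
rewrite -ler_pdivrMl //; lra.
Qed.

Lemma heavy_E3 p k d K : (k.+1 < size p)%N -> (forall x, 0 <= x -> 0 <= p.[x]) ->
  0 < d -> d <= 1 -> \forall M \near +oo, K * M ^+ k <= p.[d * M].
Proof.
move=> hs pge d0 d1.
have pn0 : p != 0 by rewrite -size_poly_gt0; apply: leq_trans hs.
have a0 := lead_pos pn0 pge.
set a := lead_coef p in a0 *.
set s := (size p).-1.
have ks : (k.+1 <= s)%N by rewrite /s -ltnS prednK // (leq_trans _ hs).
set q := p - a *: 'X^s.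
have hq : (size q <= s)%N by exact: lead_decomp.
have Sq0 := Sabs_ge0 q.
set u := a * d ^+ s.
have u0 : 0 < u by rewrite mulr_gt0 // exprn_gt0.
apply: filterS (nbhs_pinfty_gt (num_real (1 + (`|K| + Sabs q) / u))).
move=> M hM.
have hK0 : 0 <= (`|K| + Sabs q) / u by rewrite divr_ge0 // ?addr_ge0 // ltW.
have M1 : 1 <= M by lra.
have M0 : 0 < M by lra.
have dM0 : 0 <= d * M by rewrite mulr_ge0 // ltW.
have dMM : d * M <= M by rewrite -[leRHS]mul1r ler_wpM2r // ltW.
have e : p.[d * M] = q.[d * M] + a * (d * M) ^+ s.
  by rewrite /q hornerD hornerN hornerZ hornerXn addrNK.
have hb := poly_bound_inf hq dM0 dMM M1.
have Ms0 : 0 < M ^+ s by rewrite exprn_gt0.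
have uM : `|K| + Sabs q <= u * M.
  by rewrite -ler_pdivrMl //; lra.
have hMs : M ^+ k.+1 <= M ^+ s by apply: ler_weXn2l.
have hn : - `|q.[d * M]| <= q.[d * M] by rewrite lerNl -normrN ler_norm.
have hn' := ler_wpM2r (ltW M0) hn.
have h1 := ler_wpM2r (ltW Ms0) uM.
rewrite /u in h1.
have h2 : `|K| * M ^+ k.+1 <= `|K| * M ^+ s by apply: ler_wpM2l.
have key : `|K| * M ^+ k.+1 <= p.[d * M] * M.
  rewrite e mulrDl exprMn; lra.
rewrite -(ler_pM2r M0).
have h3 : K * M ^+ k * M <= `|K| * M ^+ k.+1.
  rewrite exprSr mulrA; apply: ler_wpM2r; first exact: ltW.
  by apply: ler_wpM2r; [rewrite exprn_ge0 // ltW | exact: ler_norm].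
lra.
Qed.


Lemma light_E1 p k eta : (forall j, (j < k)%N -> p`_j = 0) -> 0 < eta ->
  \forall M \near 0^'+, forall x : R, 0 <= x -> x <= M ->
    `|p.[x] - p`_k * x ^+ k| <= eta * M ^+ k.
Proof.
move=> pk eta0.
set q := p - p`_k *: 'X^k.
have hq := low_decomp pk.
have Sq0 := Sabs_ge0 q.
have r0 : 0 < eta / (Sabs q + 1) by rewrite divr_gt0 //; lra.
apply: (filter_app _ _ (nbhs_right_gt 0)); apply: (filter_app _ _ (nbhs_right_lt ltr01)).
apply: filterS (nbhs_right_lt r0) => M hM M1 M0 x x0 xM.
have e : p.[x] - p`_k * x ^+ k = q.[x].
  by rewrite /q hornerD hornerN hornerZ hornerXn.
rewrite e.
have x1 : x <= 1 by lra.
apply: le_trans (poly_bound0 hq x0 x1) _.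
have hx : x ^+ k.+1 <= M ^+ k.+1 by apply: lerXn2r; rewrite ?nnegrE // ltW.
have hSM : Sabs q * M <= eta.
  move: hM; rewrite ltr_pdivlMr; last by lra.
  have : 0 <= M by lra.
  nra.
have h1 := ler_wpM2l Sq0 hx.
have h2 := ler_wpM2r (exprn_ge0 k (ltW M0)) hSM.
rewrite [M ^+ k.+1]exprS in h1; lra.
Qed.

Lemma light_E2 p k eta : (forall j, (j < k.+1)%N -> p`_j = 0) -> 0 < eta ->
  \forall M \near 0^'+, forall x : R, 0 <= x -> x <= M -> p.[x] <= eta * M ^+ k.
Proof.
move=> pk eta0.
have Sp0 := Sabs_ge0 p.
have r0 : 0 < eta / (Sabs p + 1) by rewrite divr_gt0 //; lra.
apply: (filter_app _ _ (nbhs_right_gt 0)); apply: (filter_app _ _ (nbhs_right_lt ltr01)).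
apply: filterS (nbhs_right_lt r0) => M hM M1 M0 x x0 xM.
apply: le_trans (ler_norm _) _.
have x1 : x <= 1 by lra.
apply: le_trans (poly_bound0 pk x0 x1) _.
have hx : x ^+ k.+1 <= M ^+ k.+1 by apply: lerXn2r; rewrite ?nnegrE // ltW.
have hSM : Sabs p * M <= eta.
  move: hM; rewrite ltr_pdivlMr; last by lra.
  have : 0 <= M by lra.
  nra.
have h1 := ler_wpM2l Sp0 hx.
have h2 := ler_wpM2r (exprn_ge0 k (ltW M0)) hSM.
rewrite [M ^+ k.+1]exprS in h1; lra.
Qed.

Lemma light_E3 p k v d K : (forall j, (j < v)%N -> p`_j = 0) -> p`_v != 0 ->
  (v < k)%N -> (forall x, 0 <= x -> 0 <= p.[x]) -> 0 < d -> d <= 1 ->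
  \forall M \near 0^'+, K * M ^+ k <= p.[d * M].
Proof.
move=> pv bn0 vk pge d0 d1.
have b0 := low_pos pv bn0 pge.
set b := p`_v in b0 *.
set q := p - b *: 'X^v.
have hq := low_decomp pv.
have Sq0 := Sabs_ge0 q.
have dv0 : 0 < d ^+ v by rewrite exprn_gt0.
have r1 : 0 < b / (2 * (Sabs q + 1)) by rewrite divr_gt0 //; lra.
have r2 : 0 < d ^+ v * b / (2 * (`|K| + 1)) by rewrite divr_gt0 ?mulr_gt0 //; lra.
apply: (filter_app _ _ (nbhs_right_gt 0)); apply: (filter_app _ _ (nbhs_right_lt ltr01)).
apply: (filter_app _ _ (nbhs_right_lt r1)).
apply: filterS (nbhs_right_lt r2) => M hM2 hM1 M1 M0.
have dM0 : 0 <= d * M by rewrite mulr_ge0 // ltW.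
have dM1 : d * M <= 1 by nra.
have dMM : d * M <= M by nra.
have e : p.[d * M] = q.[d * M] + b * (d * M) ^+ v.
  by rewrite /q hornerD hornerN hornerZ hornerXn addrNK.
have f1 := poly_bound0 hq dM0 dM1.
have f1' : - (Sabs q * (d * M) ^+ v.+1) <= q.[d * M].
  by rewrite lerNl; apply: le_trans f1; rewrite -normrN ler_norm.
have f2 : Sabs q * (d * M) <= b / 2.
  move: hM1; rewrite ltr_pdivlMr; last by lra.
  have : Sabs q * (d * M) <= Sabs q * M by apply: ler_wpM2l.
  have : 0 <= M by lra.
  nra.
have Mv0 : 0 <= M ^+ v by rewrite exprn_ge0 // ltW.
have dvMv : 0 <= d ^+ v * M ^+ v by rewrite mulr_ge0 // ltW.
have f2' := ler_wpM2l dvMv f2.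
have f3 : `|K| * M <= d ^+ v * b / 2.
  move: hM2; rewrite ltr_pdivlMr; last by have := normr_ge0 K; lra.
  have : 0 <= M by lra.
  have := normr_ge0 K.
  nra.
have f3' := ler_wpM2r Mv0 f3.
have f4 : K * M ^+ k <= `|K| * (M ^+ v * M).
  apply: le_trans (_ : `|K| * M ^+ k <= _).
    by apply: ler_wpM2r; [rewrite exprn_ge0 // ltW | exact: ler_norm].
  rewrite -exprSr; apply: ler_wpM2l => //.
  by apply: ler_wiXn2l => //; exact: ltW.
rewrite e; rewrite exprSr !exprMn in f1'; rewrite exprMn.
lra.
Qed.

End PolyAsym.

Lemma poly_has_nz (R : realType) (p : {poly R}) : p != 0 -> has (fun x => x != 0) p.
Proof.
move=> pn0; apply/hasP; exists (lead_coef p); last by rewrite lead_coef_eq0.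
rewrite lead_coefE; apply: mem_nth.
by rewrite prednK // size_poly_gt0.
Qed.

Definition fnz (R : realType) (p : {poly R}) := find (fun x : R => x != 0) p.

Lemma find_nz (R : realType) (p : {poly R}) : p != 0 ->
  p`_(fnz p) != 0 /\ (forall j, (j < fnz p)%N -> p`_j = 0) /\ (fnz p < size p)%N.
Proof.
move=> pn0; have hh := poly_has_nz pn0.
split; first exact: (nth_find 0 hh).
split; last by rewrite -has_find.
by move=> j hj; apply/eqP; apply: negbFE; apply: (before_find 0 hj).
Qed.

Section Final.
Variables (R : realType) (E I P : finType) (od : P -> I) (path_of : P -> seq E)
  (c : E -> {poly R}) (lam : I -> R).
Hypothesis Huniq : forall p, uniq (path_of p).
Hypothesis Hne : forall i, exists p, od p = i.
Hypothesis Hc0 : forall e (x : R), 0 <= x -> 0 <= (c e).[x].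
Hypothesis Hcmono : forall e (x y : R), 0 <= x -> x <= y -> (c e).[x] <= (c e).[y].
Hypothesis Hlam : forall i, 0 < lam i.
Hypothesis Hlam1 : \sum_i lam i = 1.
Variable feq : R -> P -> R.
Hypothesis Hfeq : forall M : R, 0 < M -> wardrop od path_of c (fun i => lam i * M) (feq M).

Definition trivb := [forall i, [exists p, (od p == i) && all (fun e => c e == 0) (path_of p)]].

Lemma triv_PoA M : 0 < M -> trivb ->
  PoA od path_of c (fun i => lam i * M) (feq M) = 1.
Proof.
move=> M0 tb.
have Hg0 : forall i, exists g, od g = i /\ forall e, e \in path_of g -> ~~ (c e != 0).
  move=> i; move/forallP: tb => /(_ i) /existsP [p /andP[/eqP pi /allP al]].
  by exists p; split => // e /al ->.
have [g Hg] := boolp.choice Hg0.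
have Hg1 i : od (g i) = i by exact: (Hg i).1.
have Hg2 i e : e \in path_of (g i) -> ~~ (c e != 0) by exact: (Hg i).2 e.
have yf := (Hfeq M0).1.
have zf := rr_feas path_of (fun e => c e != 0) Hg1 yf.
set z := rr od path_of (fun e => c e != 0) g (feq M) in zf.
have Lz : social_cost path_of c z = 0.
  rewrite /social_cost big1 // => e _.
  case: (boolP (c e != 0)) => ce.
    by rewrite /z (rr_load_bad od Hg2 (feq M) ce) mul0r.
  by move: ce; rewrite negbK => /eqP ->; rewrite horner0 mulr0.
rewrite /PoA /Opt.
set S := [set social_cost path_of c f | f in [set f | feasible od (fun i => lam i * M) f]].
have : inf S <= 0.
  rewrite -Lz; apply: ge_inf; last by exists z.
  exists 0 => r [f Hf <-]; rewrite /social_cost; apply: sumr_ge0 => e _.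
  have l0 : 0 <= load path_of f e by apply: load_ge0; exact: Hf.1.
  by apply: mulr_ge0 => //; exact: Hc0.
by rewrite leNgt => /negbTE ->.
Qed.

Lemma triv_cvg (F : set_system R) {FF : Filter F} : trivb -> (\forall M \near F, 0 < M) ->
  PoA od path_of c (fun i => lam i * M) (feq M) @[M --> F] --> (1 : R).
Proof.
move=> tb HF0; apply/cvgrPdist_le => eps eps0.
apply: filterS HF0 => M M0.
by rewrite triv_PoA // subrr normr0 ltW.
Qed.


Lemma heavy_case : ~~ trivb ->
  PoA od path_of c (fun i => lam i * M) (feq M) @[M --> +oo] --> (1 : R).
Proof.
move=> ntb.
pose Pk k := [forall i, [exists p, (od p == i) &&
   all (fun e => (size (c e) <= k)%N) (path_of p)]].
have exP : exists k, Pk k.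
  exists (\max_e size (c e)); apply/forallP => i; have [p pi] := Hne i.
  apply/existsP; exists p; rewrite pi eqxx /=; apply/allP => e _.
  exact: (leq_bigmax e).
case: (ex_minnP exP) => n Pn nmin.
case: n Pn nmin => [|k] Pn nmin.
  exfalso; move/negP: ntb; apply; apply/forallP => i.
  move/forallP: Pn => /(_ i) /existsP [p /andP[pi al]].
  apply/existsP; exists p; rewrite pi /=; apply/allP => e /(allP al).
  by rewrite size_poly_leq0.
have nPk : ~~ Pk k by apply/negP => /nmin; rewrite ltnn.
apply: (@core_cvg _ _ _ _ od path_of c lam Huniq Hne Hc0 Hcmono Hlam Hlam1 feq Hfeq
   _ _ k (fun e => size (c e) == k.+1) (fun e => (k.+1 < size (c e))%N)
   (fun e => lead_coef (c e))).
- by move=> e /eqP ->; rewrite ltnn.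
- move=> i; move/forallP: Pn => /(_ i) /existsP [p /andP[/eqP pi al]].
  by exists p; split => // e /(allP al); rewrite -leqNgt.
- move/forallPn: nPk => [i /existsPn hi]; exists i => p pi.
  move: (hi p); rewrite pi eqxx /= => /allPn [e ep hle].
  exists e; split => //.
  by rewrite -ltnNge leq_eqVlt eq_sym in hle.
- move=> e /eqP hs; apply: lead_pos; last exact: Hc0.
  by rewrite -size_poly_gt0 hs.
- exact: nbhs_pinfty_gt (num_real 0).
- move=> eta eta0; apply: filter_forall => e.
  case: (eqVneq (size (c e)) k.+1) => hs.
    by apply: filterS (heavy_E1 hs eta0) => M H x _ x0 xM; exact: H.
  by apply: nearW => M x.
- move=> eta eta0; apply: filter_forall => e.
  case: (leqP (size (c e)) k) => hs.
    by apply: filterS (heavy_E2 hs eta0) => M H x _ _ x0 xM; exact: H.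
  apply: nearW => M x nT nB.
  by move: nT nB; rewrite -leqNgt leq_eqVlt ltnNge hs /= => /negbTE ->.
- move=> d K d0 d1; apply: filter_forall => e.
  case: (ltnP k.+1 (size (c e))) => hs.
    by apply: filterS (heavy_E3 K hs (Hc0 e) d0 d1) => M H _; exact: H.
  by apply: nearW => M.
Qed.


Lemma light_case : ~~ trivb ->
  PoA od path_of c (fun i => lam i * M) (feq M) @[M --> 0^'+] --> (1 : R).
Proof.
move=> ntb.
pose w e := (fnz (c e)).+1.
pose Qk k := [forall i, [exists p, (od p == i) &&
   all (fun e => (c e == 0) || (k <= w e)%N) (path_of p)]].
have Q1 : Qk 1%N.
  apply/forallP => i; have [p pi] := Hne i.
  by apply/existsP; exists p; rewrite pi eqxx /=; apply/allP => e _; rewrite orbT.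
set N := (\max_e size (c e))%N.
have bnd : forall k, Qk k -> (k <= N)%N.
  move=> k Qk'; rewrite leqNgt; apply/negP => hk.
  move/negP: ntb; apply; apply/forallP => i.
  move/forallP: Qk' => /(_ i) /existsP [p /andP[pi al]].
  apply/existsP; exists p; rewrite pi /=; apply/allP => e ep.
  case/orP: (allP al e ep) => // hw.
  apply/negPn/negP => ce.
  have [_ [_ hs]] := find_nz ce.
  have hN : (size (c e) <= N)%N := leq_bigmax e.
  rewrite /w in hw; lia.
case: (ex_maxnP (ex_intro _ 1%N Q1) bnd) => n Qn nmax.
have n1 : (1 <= n)%N := nmax _ Q1.
case: n Qn nmax n1 => [//|k] Qn nmax _.
have nQ : ~~ Qk k.+2 by apply/negP => /nmax; rewrite ltnn.
apply: (@core_cvg _ _ _ _ od path_of c lam Huniq Hne Hc0 Hcmono Hlam Hlam1 feq Hfeq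
   _ _ k (fun e => (c e != 0) && (w e == k.+1)) (fun e => (c e != 0) && (w e < k.+1)%N)
   (fun e => (c e)`_k)).
- by move=> e /andP[_ /eqP ->]; rewrite ltnn andbF.
- move=> i; move/forallP: Qn => /(_ i) /existsP [p /andP[/eqP pi al]].
  exists p; split => // e /(allP al).
  by rewrite negb_and negbK -leqNgt.
- move/forallPn: nQ => [i /existsPn hi]; exists i => p pi.
  move: (hi p); rewrite pi eqxx /= => /allPn [e ep hle].
  exists e; split => //.
  move: hle; rewrite negb_or -ltnNge ltnS => /andP[ce hw].
  by rewrite ce /= -leq_eqVlt.
- move=> e /andP[ce /eqP hw].
  have [nz [pv _]] := find_nz ce.
  have fk : fnz (c e) = k by move: hw; rewrite /w => -[].
  rewrite fk in nz pv.
  exact: (low_pos pv nz (Hc0 e)).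
- exact: nbhs_right_gt.
- move=> eta eta0; apply: filter_forall => e.
  case: (boolP ((c e != 0) && (w e == k.+1))) => Te.
    case/andP: Te => ce /eqP hw.
    have [nz [pv _]] := find_nz ce.
    have fk : fnz (c e) = k by move: hw; rewrite /w => -[].
    rewrite fk in pv.
    by apply: filterS (light_E1 pv eta0) => M H x _ x0 xM; exact: H.
  by apply: nearW => M x.
- move=> eta eta0; apply: filter_forall => e.
  case: (eqVneq (c e) 0) => ce.
    apply: filterS (nbhs_right_gt 0) => M M0 x _ _ x0 xM.
    by rewrite ce horner0 mulr_ge0 ?exprn_ge0 // ltW.
  case: (ltnP k.+1 (w e)) => hw.
    have [_ [pv _]] := find_nz ce.
    have pv' : forall j, (j < k.+1)%N -> (c e)`_j = 0.
      by move=> j hj; apply: pv; rewrite /w ltnS in hw; apply: leq_trans hw.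
    by apply: filterS (light_E2 pv' eta0) => M H x _ _ x0 xM; exact: H.
  apply: nearW => M x /= nT nB.
  by move: nB; rewrite ltn_neqAle nT hw.
- move=> d K d0 d1; apply: filter_forall => e.
  case: (boolP ((c e != 0) && (w e < k.+1)%N)) => Be.
    case/andP: Be => ce hw.
    have [nz [pv _]] := find_nz ce.
    have hv : (fnz (c e) < k)%N by rewrite /w ltnS in hw.
    by apply: filterS (light_E3 K pv nz hv (Hc0 e) d0 d1) => M H _; exact: H.
  by apply: nearW => M.
Qed.

End Final.

Unset Implicit Arguments.

Theorem corollary5p5 (R : realType) (V E : finType) (src tgt : E -> V)
  (I : finType) (orig dest : I -> V)
  (P : finType) (od : P -> I) (path_of : P -> seq E)
  (Hpath : forall p, is_simple_path src tgt (orig (od p)) (dest (od p)) (path_of p))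
  (Hinj : injective path_of)
  (Hne : forall i, exists p, od p = i)
  (c : E -> {poly R})
  (Hc0 : forall e (x : R), 0 <= x -> 0 <= (c e).[x])
  (Hcmono : forall e (x y : R), 0 <= x -> x <= y -> (c e).[x] <= (c e).[y])
  (lam : I -> R) (Hlam : forall i, 0 < lam i) (Hlam1 : \sum_i lam i = 1)
  (feq : R -> P -> R)
  (Hfeq : forall M : R, 0 < M -> wardrop od path_of c (fun i => lam i * M) (feq M)) :
  (PoA od path_of c (fun i => lam i * M) (feq M) @[M --> 0^'+] --> (1 : R)) /\
  (PoA od path_of c (fun i => lam i * M) (feq M) @[M --> +oo] --> (1 : R)).
Proof.
have Huniq : forall p, uniq (path_of p).
  move=> p; have := Hpath p; case: (path_of p) => // e0 s /and4P[_ _ _].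
  by rewrite cons_uniq => /andP[_ /map_uniq].
case: (boolP (trivb od path_of c)) => tb.
  split.
    by apply: triv_cvg => //; exact: nbhs_right_gt.
  by apply: triv_cvg => //; exact: (nbhs_pinfty_gt (num_real 0)).
split.
  by apply: light_case.
by apply: heavy_case.
Qed.
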